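(* If $\rho\equiv\sum_{n=1}^N \frac{r_n}{C_n}\le 1$, then for all $t\ge 0$, $$B(t)\le \min\left\{\Big(\sum_n r_n\Big)\sum_n\frac{\sigma_n}{C_n}+\sum_n\sigma_n,\;\; C_{max}\sum_n\frac{\sigma_n}{C_n}+\rho\, C_{max}\max_n\frac{L_n}{C_n}\right\}.$$
   Context: A multiclass FIFO system serves packets from $N$ classes. Class $n$ has constant service rate $C_n>0$; $C_{max}=\max_n C_n$. All packets, indexed in order of arrival (ties broken arbitrarily) as $p^{g,1},p^{g,2},\dots$ with arrival times $0\le a^{g,1}\le\cdots$ and lengths $l^{g,j}>0$, depart at $d^{g,j}=\max\{a^{g,j},d^{g,j-1}\}+l^{g,j}/C_{c(j)}$, $d^{g,0}=0$, $c(j)$ the class of $p^{g,j}$. $L_n$ is the maximum packet length of class $n$. $A_n(s,t)$ is the total length of class-$n$ packets arriving in $[s,t]$; each class satisfies $A_n(s,t)\le r_n(t-s)+\sigma_n$ for all $0\le s\le t$, with $r_n,\sigma_n\ge0$. $A(t)$ is the total length of all packets arrived in $[0,t]$, $A^*(t)$ the total length of packets with departure time $\le t$, and the backlog is $B(t)=A(t)-A^*(t)$. *)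

(* Defs.v *)
From Stdlib Require Import Reals Lra.
Open Scope R_scope.

Fixpoint sumR (n : nat) (f : nat -> R) : R :=
  match n with
  | O => 0
  | S k => sumR k f + f k
  end.

Fixpoint maxR (n : nat) (f : nat -> R) : R :=
  match n with
  | O => 0
  | S O => f O
  | S k => Rmax (maxR k f) (f k)
  end.

Definition ind (P : Prop) (dec : {P} + {~ P}) (x : R) : R :=
  if dec then x else 0.

(* Packets are indexed 1..K; a j = arrival time, l j = length, c j = class.
   Departure time: d 0 = 0, d j = max(a j, d (j-1)) + l j / C (c j). *)
Fixpoint dep (a l : nat -> R) (c : nat -> nat) (C : nat -> R) (j : nat) : R :=
  match j with
  | O => 0
  | S k => Rmax (a (S k)) (dep a l c C k) + l (S k) / C (c (S k))
  end.

Definition A_cls (K : nat) (a l : nat -> R) (c : nat -> nat) (n : nat) (s t : R) : R :=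
  sumR K (fun j =>
    if Nat.eq_dec (c (S j)) n then
      if Rle_dec s (a (S j)) then
        if Rle_dec (a (S j)) t then l (S j) else 0
      else 0
    else 0).

Definition A_tot (K : nat) (a l : nat -> R) (t : R) : R :=
  sumR K (fun j => if Rle_dec (a (S j)) t then l (S j) else 0).

Definition A_dep (K : nat) (a l : nat -> R) (c : nat -> nat) (C : nat -> R) (t : R) : R :=
  sumR K (fun j => if Rle_dec (dep a l c C (S j)) t then l (S j) else 0).

Definition backlog (K : nat) (a l : nat -> R) (c : nat -> nat) (C : nat -> R) (t : R) : R :=
  A_tot K a l t - A_dep K a l c C t.

(* Main.v *)
Require Import Defs.
From Stdlib Require Import Reals Lra Lia Classical.
Open Scope R_scope.

Lemma sumR_ext n f g : (forall q, (q < n)%nat -> f q = g q) -> sumR n f = sumR n g.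
Proof. induction n; intros H; simpl; auto. rewrite IHn by (intros; apply H; lia). rewrite H by lia. reflexivity. Qed.

Lemma sumR_le n f g : (forall q, (q < n)%nat -> f q <= g q) -> sumR n f <= sumR n g.
Proof. induction n; intros H; simpl. lra. assert (sumR n f <= sumR n g) by (apply IHn; intros; apply H; lia). specialize (H n ltac:(lia)). lra. Qed.

Lemma sumR_diff_le n f1 f2 g : (forall q, (q < n)%nat -> f1 q - f2 q <= g q) -> sumR n f1 - sumR n f2 <= sumR n g.
Proof. induction n; intros H; simpl. lra. assert (sumR n f1 - sumR n f2 <= sumR n g) by (apply IHn; intros; apply H; lia). specialize (H n ltac:(lia)). lra. Qed.

Lemma sumR_nonneg n f : (forall q, (q < n)%nat -> 0 <= f q) -> 0 <= sumR n f.
Proof. intros H. replace 0 with (sumR n (fun _ => 0)). apply sumR_le; auto. induction n; simpl; auto. rewrite IHn. lra. intros; apply H; lia. Qed.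

Lemma sumR_lin n u v x : sumR n (fun k => u k * x + v k) = x * sumR n u + sumR n v.
Proof. induction n; simpl. ring. rewrite IHn. ring. Qed.

Lemma sumR_plus n f g : sumR n (fun k => f k + g k) = sumR n f + sumR n g.
Proof. induction n; simpl. ring. rewrite IHn. ring. Qed.

Lemma sumR_zero n : sumR n (fun _ => 0) = 0.
Proof. induction n; simpl; [lra| rewrite IHn; lra]. Qed.

Lemma sumR_sel N x y : (x < N)%nat -> sumR N (fun n => if Nat.eq_dec x n then y n else 0) = y x.
Proof.
  induction N; intros H. lia. simpl.
  destruct (Nat.eq_dec x N).
  - subst x. rewrite (sumR_ext N _ (fun _ => 0)). 2:{ intros q Hq. destruct (Nat.eq_dec N q); [lia|auto]. }
    rewrite sumR_zero. lra.
  - rewrite IHN by lia. lra.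
Qed.

Lemma class_split N K (c : nat -> nat) (h g : nat -> R) :
  (forall j, (j < K)%nat -> (c (S j) < N)%nat) ->
  sumR K (fun j => h (c (S j)) * g j) =
  sumR N (fun n => h n * sumR K (fun j => if Nat.eq_dec (c (S j)) n then g j else 0)).
Proof.
  induction K; intros Hc; simpl.
  - rewrite (sumR_ext N _ (fun _ => 0)) by (intros; ring). rewrite sumR_zero; lra.
  - rewrite IHK by (intros; apply Hc; lia).
    rewrite (sumR_ext N (fun n => h n * (sumR K (fun j => if Nat.eq_dec (c (S j)) n then g j else 0) +
        (if Nat.eq_dec (c (S K)) n then g K else 0)))
       (fun n => h n * (sumR K (fun j => if Nat.eq_dec (c (S j)) n then g j else 0)) +
        (if Nat.eq_dec (c (S K)) n then h n * g K else 0))).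
    2:{ intros q _. destruct (Nat.eq_dec (c (S K)) q); ring. }
    rewrite sumR_plus. rewrite (sumR_sel N (c (S K)) (fun n => h n * g K)) by (apply Hc; lia). reflexivity.
Qed.

Lemma maxR_ge N f n : (n < N)%nat -> f n <= maxR N f.
Proof.
  induction N; intros H. lia.
  destruct (Nat.eq_dec n N).
  - subst. destruct N; simpl. lra. apply Rmax_r.
  - assert (f n <= maxR N f) by (apply IHN; lia). destruct N. lia.
    change (maxR (S (S N)) f) with (Rmax (maxR (S N) f) (f (S N))).
    eapply Rle_trans; [eassumption| apply Rmax_l].
Qed.

Lemma ex_min (P : nat -> Prop) : forall n, (exists k, (k <= n)%nat /\ P k) ->
  exists k, P k /\ forall j, (j < k)%nat -> ~ P j.
Proof.
  induction n; intros [k [Hk Pk]].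
  - exists k. split; auto. intros; lia.
  - destruct (classic (exists k, (k <= n)%nat /\ P k)) as [H|H]. apply IHn; auto.
    exists k. split; auto. intros j Hj Pj. apply H. exists j. split; auto.
    assert (k <> S n -> False). { intros. apply H. exists k. split; auto; lia. }
    destruct (Nat.eq_dec k (S n)); [lia| tauto].
Qed.

Lemma ex_max (P : nat -> Prop) : forall K, (exists k, (k <= K)%nat /\ P k) ->
  exists m, (m <= K)%nat /\ P m /\ forall j, (m < j <= K)%nat -> ~ P j.
Proof.
  induction K; intros [k [Hk Pk]].
  - exists k. repeat split; auto. intros; lia.
  - destruct (classic (P (S K))) as [H|H].
    + exists (S K). repeat split; auto. intros; lia.
    + destruct (Nat.eq_dec k (S K)). subst; tauto.
      destruct IHK as [m [Hm [Pm Hmax]]]. exists k; split; auto; lia.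
      exists m. repeat split; auto. intros j Hj. destruct (Nat.eq_dec j (S K)). subst; auto. apply Hmax; lia.
Qed.

Lemma trunc K m g : (m <= K)%nat -> sumR K (fun q => if Nat.leb (S q) m then g q else 0) = sumR m g.
Proof.
  intros H. induction K.
  - assert (m = 0%nat) by lia. subst. reflexivity.
  - destruct (Nat.eq_dec m (S K)).
    + subst. apply sumR_ext. intros q Hq. replace (Nat.leb (S q) (S K)) with true; auto. symmetry; apply Nat.leb_le; lia.
    + change (sumR (S K) (fun q => if Nat.leb (S q) m then g q else 0)) with
        (sumR K (fun q => if Nat.leb (S q) m then g q else 0) + (if Nat.leb (S K) m then g K else 0)).
      rewrite IHK by lia. replace (Nat.leb (S K) m) with false. lra. symmetry; apply Nat.leb_gt; lia.
Qed.

Definition Wr (l : nat -> R) (c : nat -> nat) (C : nat -> R) (i j : nat) :=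
  sumR j (fun q => if Nat.leb i (S q) then l (S q) / C (c (S q)) else 0).

Lemma Wr_S l c C i j : Wr l c C i (S j) = Wr l c C i j + (if Nat.leb i (S j) then l (S j) / C (c (S j)) else 0).
Proof. reflexivity. Qed.

Lemma Wr_zero l c C i j : (j < i)%nat -> Wr l c C i j = 0.
Proof. induction j; intros H. reflexivity. rewrite Wr_S, IHj by lia.
  replace (Nat.leb i (S j)) with false. lra. symmetry; apply Nat.leb_gt; lia. Qed.

Lemma dep_S a l c C j : dep a l c C (S j) = Rmax (a (S j)) (dep a l c C j) + l (S j) / C (c (S j)).
Proof. reflexivity. Qed.

Lemma w_nonneg N K l c C (HC : forall n, (n < N)%nat -> 0 < C n)
  (Hl : forall j, (1 <= j <= K)%nat -> 0 < l j) (Hc : forall j, (1 <= j <= K)%nat -> (c j < N)%nat) :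
  forall k, (1 <= k <= K)%nat -> 0 <= l k / C (c k).
Proof. intros k Hk. specialize (Hl k Hk). specialize (HC _ (Hc k Hk)).
  unfold Rdiv. apply Rmult_le_pos; [lra| left; apply Rinv_0_lt_compat; lra]. Qed.

Lemma Wr_nonneg N K l c C (HC : forall n, (n < N)%nat -> 0 < C n)
  (Hl : forall j, (1 <= j <= K)%nat -> 0 < l j) (Hc : forall j, (1 <= j <= K)%nat -> (c j < N)%nat) :
  forall i j, (j <= K)%nat -> 0 <= Wr l c C i j.
Proof. intros i j Hj. apply sumR_nonneg. intros q Hq. destruct (Nat.leb i (S q)). 
  apply (w_nonneg N K); auto; lia. lra. Qed.

Lemma dep_E a l c C K (Ha0 : forall j, (1<=j<=K)%nat -> 0 <= a j) :
  forall j, (1 <= j <= K)%nat -> exists i, (1 <= i <= j)%nat /\ dep a l c C j = a i + Wr l c C i j.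
Proof.
  induction j; intros Hj. lia.
  rewrite dep_S. destruct (Rle_dec (dep a l c C j) (a (S j))).
  - exists (S j). split. lia. rewrite Rmax_left by lra. rewrite Wr_S, Wr_zero by lia.
    rewrite Nat.leb_refl. unfold Wr; simpl; lra.
  - destruct j. simpl in n. specialize (Ha0 1%nat ltac:(lia)). lra.
    destruct IHj as [i [Hi E]]. lia. exists i. split. lia.
    rewrite Rmax_right by lra. rewrite E, (Wr_S _ _ _ i (S j)).
    replace (Nat.leb i (S (S j))) with true. lra. symmetry; apply Nat.leb_le; lia.
Qed.

Lemma dep_G N a l c C K (HC : forall n, (n < N)%nat -> 0 < C n)
  (Hl : forall j, (1 <= j <= K)%nat -> 0 < l j) (Hc : forall j, (1 <= j <= K)%nat -> (c j < N)%nat) :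
  forall q m, (q <= m <= K)%nat -> dep a l c C q + Wr l c C (S q) m <= dep a l c C m.
Proof.
  intros q m. induction m; intros H.
  - assert (q = 0%nat) by lia. subst. unfold Wr; simpl. lra.
  - destruct (Nat.eq_dec q (S m)).
    + subst. rewrite Wr_zero by lia. lra.
    + rewrite dep_S, Wr_S. replace (Nat.leb (S q) (S m)) with true by (symmetry; apply Nat.leb_le; lia).
      assert (dep a l c C q + Wr l c C (S q) m <= dep a l c C m) by (apply IHm; lia).
      pose proof (Rmax_r (a (S m)) (dep a l c C m)). lra.
Qed.

Lemma dep_mono N a l c C K (HC : forall n, (n < N)%nat -> 0 < C n)
  (Hl : forall j, (1 <= j <= K)%nat -> 0 < l j) (Hc : forall j, (1 <= j <= K)%nat -> (c j < N)%nat) :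
  forall q m, (q <= m <= K)%nat -> dep a l c C q <= dep a l c C m.
Proof. intros q m H. pose proof (dep_G N a l c C K HC Hl Hc q m H).
  pose proof (Wr_nonneg N K l c C HC Hl Hc (S q) m ltac:(lia)). lra. Qed.

Lemma a_mono K a (Hmono : forall j, (1 <= j < K)%nat -> a j <= a (S j)) :
  forall i j, (1 <= i <= j)%nat -> (j <= K)%nat -> a i <= a j.
Proof. intros i j. induction j; intros H1 H2. lia. destruct (Nat.eq_dec i (S j)). subst; lra.
  specialize (IHj ltac:(lia) ltac:(lia)). specialize (Hmono j ltac:(lia)). lra. Qed.

Lemma AC N K (C r sigma : nat -> R) (a l : nat -> R) (c : nat -> nat)
  (HC : forall n, (n < N)%nat -> 0 < C n)
  (Ha0 : forall j, (1 <= j <= K)%nat -> 0 <= a j)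
  (Hmono : forall j, (1 <= j < K)%nat -> a j <= a (S j))
  (Hl : forall j, (1 <= j <= K)%nat -> 0 < l j)
  (Hc : forall j, (1 <= j <= K)%nat -> (c j < N)%nat)
  (Hcurve : forall n s t, (n < N)%nat -> 0 <= s -> s <= t ->
             A_cls K a l c n s t <= r n * (t - s) + sigma n) :
  forall i j t, (1 <= i <= j)%nat -> (j <= K)%nat -> a j <= t ->
  Wr l c C i j <= (t - a i) * sumR N (fun n => r n / C n) + sumR N (fun n => sigma n / C n).
Proof.
  intros i j t Hij HjK Ht. unfold Wr. rewrite <- (trunc K j) by lia.
  set (T := fun q => if Rle_dec (a i) (a (S q)) then if Rle_dec (a (S q)) t then l (S q) else 0 else 0).
  apply Rle_trans with (sumR K (fun q => (fun n => / C n) (c (S q)) * T q)).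
  { apply sumR_le. intros q Hq. cbv beta. unfold T.
    assert (HCq : 0 < C (c (S q))) by (apply HC, Hc; lia).
    assert (Hlq : 0 < l (S q)) by (apply Hl; lia).
    assert (0 < / C (c (S q))) by (apply Rinv_0_lt_compat; lra).
    destruct (Nat.leb (S q) j) eqn:E1.
    - apply Nat.leb_le in E1. destruct (Nat.leb i (S q)) eqn:E2.
      + apply Nat.leb_le in E2.
        assert (a i <= a (S q)) by (apply (a_mono K); auto; lia).
        assert (a (S q) <= a j) by (apply (a_mono K); auto; lia).
        destruct (Rle_dec (a i) (a (S q))); [|lra]. destruct (Rle_dec (a (S q)) t); [|lra].
        unfold Rdiv. rewrite Rmult_comm. lra.
      + destruct (Rle_dec (a i) (a (S q))); [destruct (Rle_dec (a (S q)) t)|]; nra.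
    - destruct (Rle_dec (a i) (a (S q))); [destruct (Rle_dec (a (S q)) t)|]; nra. }
  rewrite (class_split N K c (fun n => / C n) T) by (intros; apply Hc; lia).
  apply Rle_trans with (sumR N (fun n => / C n * (r n * (t - a i) + sigma n))).
  { apply sumR_le. intros n Hn. apply Rmult_le_compat_l.
    left; apply Rinv_0_lt_compat, HC; auto.
    apply Hcurve; auto. apply Ha0; lia. pose proof (a_mono K a Hmono i j Hij HjK). lra. }
  rewrite <- sumR_lin. right. apply sumR_ext. intros; unfold Rdiv; ring.
Qed.

Lemma delay N K (C r sigma : nat -> R) (a l : nat -> R) (c : nat -> nat)
  (HC : forall n, (n < N)%nat -> 0 < C n)
  (Ha0 : forall j, (1 <= j <= K)%nat -> 0 <= a j)
  (Hmono : forall j, (1 <= j < K)%nat -> a j <= a (S j))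
  (Hl : forall j, (1 <= j <= K)%nat -> 0 < l j)
  (Hc : forall j, (1 <= j <= K)%nat -> (c j < N)%nat)
  (Hcurve : forall n s t, (n < N)%nat -> 0 <= s -> s <= t ->
             A_cls K a l c n s t <= r n * (t - s) + sigma n)
  (Hrho0 : 0 <= sumR N (fun n => r n / C n))
  (Hrho : sumR N (fun n => r n / C n) <= 1) :
  forall j, (1 <= j <= K)%nat -> dep a l c C j <= a j + sumR N (fun n => sigma n / C n).
Proof.
  intros j Hj. destruct (dep_E a l c C K Ha0 j Hj) as [i [Hi E]]. rewrite E.
  pose proof (AC N K C r sigma a l c HC Ha0 Hmono Hl Hc Hcurve i j (a j) Hi ltac:(lia) (Rle_refl _)).
  pose proof (a_mono K a Hmono i j Hi ltac:(lia)).
  assert ((a j - a i) * sumR N (fun n => r n / C n) <= (a j - a i)) by nra. lra.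
Qed.

Lemma Wr_split l c C : forall i j m, (i <= S j)%nat -> (j <= m)%nat -> Wr l c C i m = Wr l c C i j + Wr l c C (S j) m.
Proof.
  intros i j m. induction m; intros H1 H2.
  - assert (j = 0%nat) by lia. subst. unfold Wr; simpl; lra.
  - destruct (Nat.eq_dec j (S m)). subst. rewrite (Wr_zero _ _ _ (S (S m)) (S m)) by lia. lra.
    rewrite !Wr_S, IHm by lia.
    replace (Nat.leb i (S m)) with true by (symmetry; apply Nat.leb_le; lia).
    replace (Nat.leb (S j) (S m)) with true by (symmetry; apply Nat.leb_le; lia). lra.
Qed.

Lemma sumR_scal n x f : sumR n (fun q => x * f q) = x * sumR n f.
Proof. induction n; simpl. ring. rewrite IHn. ring. Qed.

Theorem theorem2
  (N : nat) (C r sigma L : nat -> R)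
  (K : nat) (a l : nat -> R) (c : nat -> nat)
  (HN : (1 <= N)%nat)
  (HC : forall n, (n < N)%nat -> 0 < C n)
  (Hr : forall n, (n < N)%nat -> 0 <= r n)
  (Hsigma : forall n, (n < N)%nat -> 0 <= sigma n)
  (HL0 : forall n, (n < N)%nat -> 0 <= L n)
  (Ha0 : forall j, (1 <= j <= K)%nat -> 0 <= a j)
  (Hmono : forall j, (1 <= j < K)%nat -> a j <= a (S j))
  (Hl : forall j, (1 <= j <= K)%nat -> 0 < l j)
  (Hc : forall j, (1 <= j <= K)%nat -> (c j < N)%nat)
  (HL : forall j, (1 <= j <= K)%nat -> l j <= L (c j))
  (Hcurve : forall n s t, (n < N)%nat -> 0 <= s -> s <= t ->
             A_cls K a l c n s t <= r n * (t - s) + sigma n)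
  (Hrho : sumR N (fun n => r n / C n) <= 1) :
  forall t, 0 <= t ->
    backlog K a l c C t <=
    Rmin (sumR N r * sumR N (fun n => sigma n / C n) + sumR N sigma)
         (maxR N C * sumR N (fun n => sigma n / C n)
          + sumR N (fun n => r n / C n) * maxR N C * maxR N (fun n => L n / C n)).
Proof.
  intros t Ht.
  set (rho := sumR N (fun n => r n / C n)) in *.
  set (S0 := sumR N (fun n => sigma n / C n)).
  set (Cmax := maxR N C). set (LC := maxR N (fun n => L n / C n)).
  assert (Hdiv : forall x n, (n < N)%nat -> 0 <= x -> 0 <= x / C n).
  { intros x n Hn Hx. unfold Rdiv. apply Rmult_le_pos; auto. left; apply Rinv_0_lt_compat, HC; auto. }
  assert (Hrho0 : 0 <= rho) by (apply sumR_nonneg; intros; apply Hdiv; auto).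
  assert (HS0 : 0 <= S0) by (apply sumR_nonneg; intros; apply Hdiv; auto).
  assert (Hsr : 0 <= sumR N r) by (apply sumR_nonneg; auto).
  assert (Hss : 0 <= sumR N sigma) by (apply sumR_nonneg; auto).
  assert (HCmax : 0 < Cmax) by (pose proof (maxR_ge N C 0 ltac:(lia)); pose proof (HC 0%nat ltac:(lia)); unfold Cmax; lra).
  assert (HLC : 0 <= LC) by (pose proof (maxR_ge N (fun n => L n / C n) 0 ltac:(lia)); pose proof (Hdiv (L 0%nat) 0%nat ltac:(lia) (HL0 0%nat ltac:(lia))); unfold LC; simpl in *; lra).
  assert (Hw : forall k, (1 <= k <= K)%nat -> 0 <= l k / C (c k)) by (intros; apply (w_nonneg N K); auto).
  assert (Hdelay := delay N K C r sigma a l c HC Ha0 Hmono Hl Hc Hcurve Hrho0 Hrho).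
  fold S0 in Hdelay. unfold backlog, A_tot, A_dep. apply Rmin_glb.
  -
    set (s0 := Rmax 0 (t - S0)).
    assert (Hs0a : 0 <= s0) by apply Rmax_l.
    assert (Hs0b : t - S0 <= s0) by apply Rmax_r.
    assert (Hs0c : s0 <= t) by (apply Rmax_lub; lra).
    set (T0 := fun q => if Rle_dec s0 (a (S q)) then if Rle_dec (a (S q)) t then l (S q) else 0 else 0).
    assert (HT0 : forall q, (q < K)%nat -> 0 <= T0 q).
    { intros q Hq. unfold T0. pose proof (Hl (S q) ltac:(lia)).
      destruct (Rle_dec s0 (a (S q))); [destruct (Rle_dec (a (S q)) t)|]; lra. }
    apply Rle_trans with (sumR K (fun q => (fun _ => 1) (c (S q)) * T0 q)).
    { apply sumR_diff_le. intros q Hq. cbv beta. pose proof (HT0 q Hq).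
      pose proof (Hl (S q) ltac:(lia)). pose proof (Hdelay (S q) ltac:(lia)).
      destruct (Rle_dec (a (S q)) t); destruct (Rle_dec (dep a l c C (S q)) t); try lra.
      unfold T0. destruct (Rle_dec s0 (a (S q))). destruct (Rle_dec (a (S q)) t); lra.
      exfalso. apply n0. apply Rmax_lub. apply Ha0; lia. lra. }
    rewrite (class_split N K c (fun _ => 1) T0) by (intros; apply Hc; lia).
    apply Rle_trans with (sumR N (fun n => r n * (t - s0) + sigma n)).
    { apply sumR_le. intros n Hn. rewrite Rmult_1_l. apply Hcurve; auto. }
    rewrite sumR_lin. assert ((t - s0) * sumR N r <= S0 * sumR N r) by (apply Rmult_le_compat_r; lra).
    lra.
  -
    assert (Hgoal0 : 0 <= Cmax * S0 + rho * Cmax * LC).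
    { pose proof (Rmult_le_pos _ _ Hrho0 (Rlt_le _ _ HCmax)). pose proof (Rmult_le_pos _ _ H HLC).
      pose proof (Rmult_le_pos _ _ (Rlt_le _ _ HCmax) HS0). lra. }
    destruct (classic (exists k, (1 <= k <= K)%nat /\ a k <= t /\ t < dep a l c C k)) as [Hex|Hnex].
    2:{ apply Rle_trans with (sumR K (fun _ => 0)). 2: rewrite sumR_zero; lra.
        apply sumR_diff_le. intros q Hq. pose proof (Hl (S q) ltac:(lia)).
        destruct (Rle_dec (a (S q)) t); destruct (Rle_dec (dep a l c C (S q)) t); try lra.
        exfalso. apply Hnex. exists (S q). repeat split; try lia; lra. }
    destruct Hex as [k0 [Hk0 [Hak0 Hdk0]]].
    destruct (ex_max (fun k => (1 <= k)%nat /\ a k <= t) K) as [m [HmK [[Hm1 Ham] Hmax]]].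
    { exists k0. split. lia. split; [lia|auto]. }
    assert (Hlem : forall k, (1 <= k <= K)%nat -> a k <= t -> (k <= m)%nat).
    { intros k Hk Hak. destruct (Compare_dec.le_lt_dec k m); auto. exfalso. apply (Hmax k). lia. split; [lia|auto]. }
    destruct (ex_min (fun k => (1 <= k <= m)%nat /\ t < dep a l c C k) k0) as [p [[Hp Hdp] Hmin]].
    { exists k0. split. lia. split; auto. split. lia. apply Hlem; auto. }
    assert (Hkey : Wr l c C p m <= S0 + rho * (l p / C (c p))).
    { destruct (dep_E a l c C K Ha0 m ltac:(lia)) as [i [Hi Ei]].
      destruct (Compare_dec.le_lt_dec i p) as [Hip|Hpi].
      - set (X := a i + Wr l c C i (p - 1)).
        assert (Hsp1 : Wr l c C i m = Wr l c C i (p-1) + Wr l c C p m).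
        { replace p with (S (p-1)) at 2 by lia. apply Wr_split; lia. }
        assert (Hsp2 : Wr l c C p m = Wr l c C p p + Wr l c C (S p) m) by (apply Wr_split; lia).
        assert (Hpp : Wr l c C p p = l p / C (c p)).
        { replace p with (S (p-1)) at 2 by lia. rewrite Wr_S, Wr_zero by lia.
          replace (Nat.leb p (S (p-1))) with true by (symmetry; apply Nat.leb_le; lia).
          replace (S (p-1)) with p by lia. lra. }
        pose proof (dep_G N a l c C K HC Hl Hc p m ltac:(lia)).
        pose proof (AC N K C r sigma a l c HC Ha0 Hmono Hl Hc Hcurve i m t Hi ltac:(lia) Ham).
        fold rho S0 in H0.
        pose proof (Wr_nonneg N K l c C HC Hl Hc i (p-1) ltac:(lia)).
        assert (HX1 : t - X < l p / C (c p)) by (unfold X; lra).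
        assert (HX2 : 0 <= X - a i) by (unfold X; lra).
        assert (0 <= (1 - rho) * (X - a i)) by (apply Rmult_le_pos; lra).
        assert (0 <= rho * (l p / C (c p) - (t - X))) by (apply Rmult_le_pos; lra).
        unfold X in *. nra.
      - exfalso. pose proof (dep_G N a l c C K HC Hl Hc (i-1) m ltac:(lia)).
        replace (S (i-1)) with i in H by lia.
        pose proof (dep_mono N a l c C K HC Hl Hc p (i-1) ltac:(lia)).
        pose proof (a_mono K a Hmono i m ltac:(lia) HmK). lra. }
    set (g := fun q => if Nat.leb p (S q) then l (S q) / C (c (S q)) else 0).
    apply Rle_trans with (sumR K (fun q => if Nat.leb (S q) m then Cmax * g q else 0)).
    { apply sumR_diff_le. intros q Hq. unfold g.
      pose proof (Hl (S q) ltac:(lia)). pose proof (Hw (S q) ltac:(lia)).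
      assert (HCq : 0 < C (c (S q))) by (apply HC, Hc; lia).
      assert (HCm : C (c (S q)) <= Cmax) by (apply maxR_ge, Hc; lia).
      assert (Hge : 0 <= (if Nat.leb (S q) m then Cmax * (if Nat.leb p (S q) then l (S q) / C (c (S q)) else 0) else 0)).
      { destruct (Nat.leb (S q) m); [destruct (Nat.leb p (S q))|]; nra. }
      destruct (Rle_dec (a (S q)) t); destruct (Rle_dec (dep a l c C (S q)) t); try lra.
      assert (Hqm : (S q <= m)%nat) by (apply Hlem; auto; lia).
      assert (Hpq : (p <= S q)%nat).
      { destruct (Compare_dec.le_lt_dec p (S q)); auto. exfalso. apply (Hmin (S q)); auto. split. lia. lra. }
      replace (Nat.leb (S q) m) with true by (symmetry; apply Nat.leb_le; lia).
      replace (Nat.leb p (S q)) with true by (symmetry; apply Nat.leb_le; lia).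
      assert (l (S q) = C (c (S q)) * (l (S q) / C (c (S q)))) by (field; lra).
      assert (C (c (S q)) * (l (S q) / C (c (S q))) <= Cmax * (l (S q) / C (c (S q)))) by (apply Rmult_le_compat_r; lra).
      lra. }
    rewrite (trunc K m (fun q => Cmax * g q)) by lia. rewrite sumR_scal.
    change (sumR m g) with (Wr l c C p m).
    assert (l p / C (c p) <= LC).
    { apply Rle_trans with (L (c p) / C (c p)). unfold Rdiv. apply Rmult_le_compat_r.
      left; apply Rinv_0_lt_compat, HC, Hc; lia. apply HL; lia.
      apply (maxR_ge N (fun n => L n / C n)). apply Hc; lia. }
    assert (rho * (l p / C (c p)) <= rho * LC) by (apply Rmult_le_compat_l; lra).
    assert (Cmax * Wr l c C p m <= Cmax * (S0 + rho * LC)) by (apply Rmult_le_compat_l; lra).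
    lra.
Qed.
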